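(* Suppose Assumptions 1 and 2 hold, and let $\rho > \mathcal{D}_{Z_\star} := \max_{(y^\star,Z^\star)\in\mathcal{D}^\star}\operatorname{tr}(Z^\star)$. Then a matrix $\hat X\in\mathbb{S}^n$ is an optimal solution of the primal SDP (P) if and only if it is an optimal solution of the penalized problem $$\min_{X\in\mathbb{S}^n}\ \langle C,X\rangle+\rho\max\{\lambda_{\max}(-X),0\}\quad\text{subject to}\quad \langle A_i,X\rangle=b_i,\ i=1,\dots,m.$$
   Context: Data: $b\in\mathbb{R}^m$ and $C,A_1,\dots,A_m\in\mathbb{S}^n$ (real symmetric $n\times n$ matrices), with the trace inner product $\langle X,Y\rangle=\operatorname{tr}(XY)$. Define $\mathcal{A}:\mathbb{S}^n\to\mathbb{R}^m$, $\mathcal{A}(X)=(\langle A_1,X\rangle,\dots,\langle A_m,X\rangle)^\top$, with adjoint $\mathcal{A}^*(y)=\sum_{i=1}^m y_iA_i$. The primal SDP (P) is $\min_X\langle C,X\rangle$ s.t. $\mathcal{A}(X)=b$, $X\succeq 0$; the dual SDP (D) is $\max_{y,Z} b^\top y$ s.t. $Z+\mathcal{A}^*(y)=C$, $Z\succeq0$. $\mathcal{P}^\star$ is the set of optimal solutions of (P) and $\mathcal{D}^\star$ the set of optimal pairs $(y,Z)$ of (D). Assumption 1: $A_1,\dots,A_m$ are linearly independent. Assumption 2: (P) and (D) are both strictly feasible (there is a feasible $X\succ0$ for (P) and a feasible $(y,Z)$ with $Z\succ0$ for (D)). Under these assumptions $\mathcal{D}^\star$ is nonempty and compact, so the maximum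 defining $\mathcal{D}_{Z_\star}$ exists. $\lambda_{\max}$ denotes the largest eigenvalue. *)

(* Defs.v *)
From HB Require Import structures.
From mathcomp Require Import all_boot all_order all_algebra.
From mathcomp Require Import all_classical all_reals.
Set Implicit Arguments. Unset Strict Implicit. Unset Printing Implicit Defensive.
Import Order.TTheory GRing.Theory Num.Theory.
Local Open Scope classical_set_scope.
Local Open Scope ring_scope.

Section SDP.
Variables (R : realType) (n m : nat).

Definition symmx (X : 'M[R]_n) : Prop := X^T = X.

Definition trinner (X Y : 'M[R]_n) : R := \tr (X *m Y).

Definition psd (X : 'M[R]_n) : Prop :=
  symmx X /\ forall x : 'cV[R]_n, 0 <= (x^T *m X *m x) 0 0.

Definition pd (X : 'M[R]_n) : Prop :=
  symmx X /\ forall x : 'cV[R]_n, x != 0 -> 0 < (x^T *m X *m x) 0 0.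

Definition lambda_max (X : 'M[R]_n) : R := sup [set a : R | eigenvalue X a].

Variables (C : 'M[R]_n) (A : 'I_m -> 'M[R]_n) (b : 'I_m -> R).

Definition opA (X : 'M[R]_n) : 'I_m -> R := fun i => trinner (A i) X.
Definition opAadj (y : 'I_m -> R) : 'M[R]_n := \sum_(i < m) y i *: A i.

Definition primal_feasible (X : 'M[R]_n) : Prop :=
  symmx X /\ opA X = b /\ psd X.

Definition primal_optimal (X : 'M[R]_n) : Prop :=
  primal_feasible X /\ forall X', primal_feasible X' -> trinner C X <= trinner C X'.

Definition dual_obj (y : 'I_m -> R) : R := \sum_(i < m) b i * y i.

Definition dual_feasible (y : 'I_m -> R) (Z : 'M[R]_n) : Prop :=
  symmx Z /\ Z + opAadj y = C /\ psd Z.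

Definition dual_optimal (y : 'I_m -> R) (Z : 'M[R]_n) : Prop :=
  dual_feasible y Z /\
  forall y' Z', dual_feasible y' Z' -> dual_obj y' <= dual_obj y.

(* D_Zstar = max over dual optimal pairs (y, Z) of tr Z; max attained under the assumptions *)
Definition D_Zstar : R :=
  sup [set t : R | exists y Z, dual_optimal y Z /\ t = \tr Z].

Definition lin_indep : Prop :=
  forall y : 'I_m -> R, opAadj y = 0 -> forall i, y i = 0.

Definition strictly_feasible : Prop :=
  (exists X, symmx X /\ opA X = b /\ pd X) /\
  (exists y Z, symmx Z /\ Z + opAadj y = C /\ pd Z).

Definition penalized_obj (rho : R) (X : 'M[R]_n) : R :=
  trinner C X + rho * Num.max (lambda_max (- X)) 0.

Definition penalized_feasible (X : 'M[R]_n) : Prop :=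
  symmx X /\ opA X = b.

Definition penalized_optimal (rho : R) (X : 'M[R]_n) : Prop :=
  penalized_feasible X /\
  forall X', penalized_feasible X' -> penalized_obj rho X <= penalized_obj rho X'.

End SDP.

(* Main.v *)
Require Import Defs.
From HB Require Import structures.
From mathcomp Require Import all_boot all_order all_algebra.
From mathcomp Require Import all_classical all_reals.
From mathcomp Require Import topology normedtype derive.
From mathcomp Require Import ring lra.
Import Order.TTheory GRing.Theory Num.Theory.
Import numFieldNormedType.Exports.
Local Open Scope ring_scope.

Section Topo.
Local Open Scope classical_set_scope.
Variable R : realType.

Lemma cont_sum (T : topologicalType) (I : Type) (r : seq I) (f : I -> T -> R) :
  (forall i, continuous (f i)) -> continuous (fun x => \sum_(i <- r) f i x).
Proof.
move=> fc; elim: r => [|i r IH].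
  under eq_fun do rewrite big_nil. exact: cst_continuous.
under eq_fun do rewrite big_cons.
move=> x; apply: continuousD; [exact: fc|exact: IH].
Qed.

Lemma cont_coord N (j : 'I_N) : continuous (fun v : 'rV[R]_N => v 0 j).
Proof. exact: coord_continuous. Qed.

Lemma cont_mul (T : topologicalType) (f g : T -> R) :
  continuous f -> continuous g -> continuous (fun x => f x * g x).
Proof. by move=> cf cg x; apply: continuousM; [exact: cf|exact: cg]. Qed.

Lemma lin_cont N (f : 'rV[R]_N -> R) :
  (forall a u v, f (a *: u + v) = a * f u + f v) -> continuous f.
Proof.
move=> fl.
have f0 : f 0 = 0.
  have := fl 1 0 0; rewrite scaler0 addr0 mul1r => h; lra.
have fZ a u : f (a *: u) = a * f u by rewrite -[a *: u]addr0 fl f0 addr0.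
have fD u v : f (u + v) = f u + f v by have := fl 1 u v; rewrite scale1r mul1r.
have fsum (r : seq 'I_N) (g : 'I_N -> 'rV[R]_N) :
    f (\sum_(j <- r) g j) = \sum_(j <- r) f (g j).
  elim: r => [|j r IH]; first by rewrite !big_nil.
  by rewrite !big_cons fD IH.
have -> : f = fun v => \sum_(j <- index_enum 'I_N) v 0 j * f 'e_j.
  apply: funext => v; rewrite {1}[v]row_sum_delta fsum.
  by apply: eq_bigr => j _; rewrite fZ.
apply: cont_sum => j; apply: cont_mul; first exact: cont_coord.
exact: cst_continuous.
Qed.

Lemma bounded_entries N (A : set 'rV[R]_N) (M : R) :
  (forall v, A v -> forall j, `|v 0 j| <= M) -> bounded_set A.
Proof.
move=> AM.
suff : \forall K \near +oo, forall v, A v -> `|v| <= K by [].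
near=> K => v Av.
rewrite [`|v|]mx_normrE; apply: bigmax_le => [|[i j] _] /=.
  by near: K; apply: nbhs_pinfty_ge; exact: num_real.
rewrite (ord1 i); apply: le_trans (AM v Av j) _.
by near: K; apply: nbhs_pinfty_ge; exact: num_real.
Unshelve. all: by end_near.
Qed.


Lemma closed_preim_ge (T : topologicalType) (f : T -> R) (c : R) :
  continuous f -> closed [set x | c <= f x].
Proof.
move=> hf; apply: (@preimage_closed _ _ f [set r | c <= r]); last exact: closed_ge.
by move=> x _; exact: hf.
Qed.

Lemma closed_preim_le (T : topologicalType) (f : T -> R) (c : R) :
  continuous f -> closed [set x | f x <= c].
Proof.
move=> hf; apply: (@preimage_closed _ _ f [set r | r <= c]); last exact: closed_le.
by move=> x _; exact: hf.
Qed.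

Lemma closed_preim_eq (T : topologicalType) (f : T -> R) (c : R) :
  continuous f -> closed [set x | f x = c].
Proof.
move=> hf; apply: (@preimage_closed _ _ f [set r | r = c]); last exact: closed_eq.
by move=> x _; exact: hf.
Qed.

End Topo.

Set Implicit Arguments. Unset Strict Implicit.

Section Alg.
Variables (R : realType) (n : nat).
Implicit Types (P Q M : 'M[R]_n) (x y z : 'cV[R]_n).

Definition bil M x y : R := (x^T *m M *m y) 0 0.
Definition evec (i : 'I_n) : 'cV[R]_n := delta_mx i 0.

Lemma bilDl M x y z : bil M (x + y) z = bil M x z + bil M y z.
Proof. by rewrite /bil linearD /= !mulmxDl mxE. Qed.
Lemma bilZl M a x z : bil M (a *: x) z = a * bil M x z.
Proof. by rewrite /bil linearZ /= -!scalemxAl mxE. Qed.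
Lemma bilDr M x y z : bil M z (x + y) = bil M z x + bil M z y.
Proof. by rewrite /bil mulmxDr mxE. Qed.
Lemma bilZr M a x z : bil M z (a *: x) = a * bil M z x.
Proof. by rewrite /bil -scalemxAr mxE. Qed.
Lemma bilN M x z : bil M (- x) z = - bil M x z.
Proof. by rewrite -scaleN1r bilZl mulN1r. Qed.
Lemma bilDM P Q x y : bil (P + Q) x y = bil P x y + bil Q x y.
Proof. by rewrite /bil mulmxDr mulmxDl mxE. Qed.
Lemma bilZM a P x y : bil (a *: P) x y = a * bil P x y.
Proof. by rewrite /bil -scalemxAr -scalemxAl mxE. Qed.
Lemma bilNM P x y : bil (- P) x y = - bil P x y.
Proof. by rewrite -scaleN1r bilZM mulN1r. Qed.
Lemma bil0M x y : bil 0 x y = 0.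
Proof. by rewrite /bil mulmx0 mul0mx mxE. Qed.
Lemma bil_sumM I (r : seq I) (F : I -> 'M[R]_n) x y :
  bil (\sum_(i <- r) F i) x y = \sum_(i <- r) bil (F i) x y.
Proof.
elim: r => [|i r IH]; first by rewrite !big_nil bil0M.
by rewrite !big_cons bilDM IH.
Qed.

Lemma bilC M x y : symmx M -> bil M x y = bil M y x.
Proof.
move=> sM; rewrite /bil -[in LHS](trmxK (x^T *m M *m y)) [in LHS]mxE.
by rewrite !trmx_mul trmxK sM mulmxA.
Qed.

Lemma bil_ev M i j : bil M (evec i) (evec j) = M i j.
Proof. by rewrite /bil /evec trmx_delta -rowE -colE !mxE. Qed.

Lemma bil_evl M i y : bil M (evec i) y = (M *m y) i 0.
Proof. by rewrite /bil /evec trmx_delta -rowE -row_mul mxE. Qed.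

Lemma mul11 (u : 'M[R]_(1, n)) (v : 'cV[R]_n) (w : 'M[R]_(1,n)) (z : 'cV[R]_n) :
  (u *m (v *m w) *m z) 0 0 = (u *m v) 0 0 * (w *m z) 0 0.
Proof.
by rewrite mulmxA -mulmxA mxE big_ord1.
Qed.

Lemma trT11 (u : 'M[R]_(1, n)) (v : 'cV[R]_n) : (u *m v) 0 0 = (v^T *m u^T) 0 0.
Proof. by rewrite -trmx_mul [RHS]mxE. Qed.

Lemma bil_outer (u v : 'cV[R]_n) x y :
  bil (u *m v^T) x y = (x^T *m u) 0 0 * (v^T *m y) 0 0.
Proof. by rewrite /bil -mulmxA mulmxA mul11. Qed.

Lemma trinner_outer M (u v : 'cV[R]_n) : trinner M (u *m v^T) = bil M v u.
Proof.
rewrite /trinner /bil mulmxA mxtrace_mulC mulmxA.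
by rewrite trace_mx11.
Qed.

Lemma trinnerDl P Q M : trinner (P + Q) M = trinner P M + trinner Q M.
Proof. by rewrite /trinner mulmxDl mxtraceD. Qed.
Lemma trinnerZl a P M : trinner (a *: P) M = a * trinner P M.
Proof. by rewrite /trinner -scalemxAl mxtraceZ. Qed.
Lemma trinnerDr P Q M : trinner M (P + Q) = trinner M P + trinner M Q.
Proof. by rewrite /trinner mulmxDr mxtraceD. Qed.
Lemma trinnerZr a P M : trinner M (a *: P) = a * trinner M P.
Proof. by rewrite /trinner -scalemxAr mxtraceZ. Qed.
Lemma trinnerC P Q : trinner P Q = trinner Q P.
Proof. exact: mxtrace_mulC. Qed.
Lemma trinner0l M : trinner 0 M = 0.
Proof. by rewrite /trinner mul0mx mxtrace0. Qed.
Lemma trinner1l M : trinner 1%:M M = \tr M.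
Proof. by rewrite /trinner mul1mx. Qed.

Lemma trinner1r M : trinner M 1%:M = \tr M.
Proof. by rewrite /trinner mulmx1. Qed.
Lemma trinnerNr P M : trinner M (- P) = - trinner M P.
Proof. by rewrite -scaleN1r trinnerZr mulN1r. Qed.
Lemma trinnerNl P M : trinner (- P) M = - trinner P M.
Proof. by rewrite -scaleN1r trinnerZl mulN1r. Qed.

Lemma psd_outer (u : 'cV[R]_n) : psd (u *m u^T).
Proof.
split; first by rewrite /symmx trmx_mul trmxK.
move=> x; have := bil_outer u u x x; rewrite /bil => ->.
rewrite [(u^T *m x) 0 0]trT11 trmxK.
by rewrite -expr2 sqr_ge0.
Qed.


Lemma psd_bil P x : psd P -> 0 <= bil P x x.
Proof. by case=> _; apply. Qed.
Arguments psd_bil {P} x.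

Lemma psd_diag P i : psd P -> 0 <= P i i.
Proof. by move=> /(psd_bil (evec i)); rewrite bil_ev. Qed.

Lemma bil_quad P i j (t : R) : symmx P ->
  bil P (t *: evec j + evec i) (t *: evec j + evec i) =
  t ^+ 2 * P j j + 2 * t * P i j + P i i.
Proof.
move=> sP; rewrite !bilDl !bilDr !bilZl !bilZr !bil_ev.
have -> : P j i = P i j by rewrite -{1}sP mxE.
by rewrite expr2; lra.
Qed.

Lemma psd_zero_diag P i j : psd P -> P j j = 0 -> P i j = 0.
Proof.
move=> pP Pjj; have [sP _] := pP.
apply/eqP; apply/negPn/negP => Pij.
pose t := - (P i i + 1) / (2 * P i j).
have := psd_bil (t *: evec j + evec i) pP.
rewrite bil_quad // Pjj mulr0 add0r.
have -> : 2 * t * P i j = - (P i i + 1).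
  by rewrite /t; field.
lra.
Qed.

Lemma diag_le_tr P i : psd P -> P i i <= \tr P.
Proof.
move=> pP; rewrite /mxtrace (bigD1 i) //= lerDl.
by apply: sumr_ge0 => k _; exact: psd_diag.
Qed.

Arguments diag_le_tr {P} i.
Lemma psd_entry_le P i j : psd P -> `|P i j| <= \tr P.
Proof.
move=> pP; have [sP _] := pP.
have h1 := psd_bil (evec j + evec i) pP.
have h2 := psd_bil ((-1) *: evec j + evec i) pP.
move: h1; rewrite -[evec j]scale1r bil_quad // => h1.
move: h2; rewrite bil_quad // => h2.
have d1 := diag_le_tr i pP; have d2 := diag_le_tr j pP.
rewrite ler_norml; apply/andP; split; nra.
Qed.


Lemma psd_zero_mx P : psd P -> (forall j, P j j = 0) -> P = 0.
Proof. by move=> pP h; apply/matrixP => i j; rewrite mxE; exact: psd_zero_diag. Qed.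

Lemma symE P a b : symmx P -> P a b = P b a.
Proof. by move=> sP; rewrite -{1}sP mxE. Qed.

Arguments psd_zero_mx {P}.
Arguments symE {P}.
Arguments bilC {M}.
Lemma colz M b : (col b M == 0) = [forall a, M a b == 0].
Proof.
apply/eqP/forallP => [h a | h].
  by have := congr1 (fun N : 'cV[R]_n => N a 0) h; rewrite !mxE => ->.
by apply/colP => a; rewrite !mxE; exact/eqP.
Qed.

Lemma bil_col P x j : bil P x (evec j) = (x^T *m col j P) 0 0.
Proof. by rewrite /bil /evec -mulmxA -colE. Qed.

Lemma trinner_psd P Q : psd P -> psd Q -> 0 <= trinner P Q.
Proof.
move=> pP pQ.
have [k] := ubnP #|[set j | col j P != 0]|.
elim: k P pP => // k IH P pP.
rewrite ltnS => hk.
have [P0|] := boolP [forall j, P j j == 0].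
  rewrite (psd_zero_mx pP) ?trinner0l // => j.
  by move/forallP: P0 => /(_ j) /eqP.
move=> /forallPn [j /= Pj].
have [sP _] := pP.
have dpos : 0 < P j j by rewrite lt_def Pj psd_diag.
set d := P j j in Pj dpos.
set p := col j P.
set P' := P - d^-1 *: (p *m p^T).
have P'E a b : P' a b = P a b - d^-1 * (P a j * P b j).
  by rewrite !mxE big_ord1 !mxE.
have sP' : symmx P'.
  apply/matrixP => a b; rewrite mxE !P'E (symE a b sP); ring.
have pP' : psd P'.
  split => // x.
  change (0 <= bil P' x x).
  have -> : bil P' x x = bil P x x - d^-1 * (bil P x (evec j)) ^+ 2.
    rewrite /P' bilDM bilNM bilZM bil_outer bil_col.
    by rewrite [(p^T *m x) 0 0]trT11 trmxK expr2.
  set s := bil P x (evec j).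
  have := psd_bil (x + (- (d^-1 * s)) *: evec j) pP.
  rewrite !bilDl !bilDr !bilZl !bilZr bil_ev (bilC (evec j) x sP) -/s -/d.
  have dn0 : d != 0 by [].
  move=> h.
  have -> : bil P x x - d^-1 * s ^+ 2 =
     bil P x x + - (d^-1 * s) * s +
    (- (d^-1 * s) * s + - (d^-1 * s) * (- (d^-1 * s) * d)).
    by field.
  exact: h.
have hk' : (#|[set b | col b P' != 0%R]| < k)%N.
  apply: leq_trans hk; rewrite (cardsD1 j [set b | col b P != 0]) inE.
  have -> : (col j P != 0) = true.
    apply/negP => /eqP /(congr1 (fun N : 'cV[R]_n => N j 0)); rewrite !mxE.
    by move/eqP; rewrite (negbTE Pj).
  rewrite add1n ltnS; apply: subset_leq_card; apply/fintype.subsetP => b.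
  rewrite !inE => nzb; apply/andP; split.
    apply: contraNneq nzb => ->; rewrite colz; apply/forallP => a.
    by rewrite P'E -/d; apply/eqP; field.
  apply: contra nzb; rewrite !colz => /forallP h; apply/forallP => a.
  rewrite P'E (eqP (h a)) (symE b j sP) (eqP (h j)); apply/eqP; ring.
have := IH P' pP' hk'.
have -> : P = P' + d^-1 *: (p *m p^T) by rewrite /P' subrK.
rewrite trinnerDl trinnerZl trinnerC (trinnerC _ Q) trinner_outer => h.
apply: addr_ge0 => //; apply: mulr_ge0; first by rewrite invr_ge0 ltW.
exact: psd_bil.
Qed.

End Alg.
Arguments evec {R n} i.

Section Ray.
Local Open Scope classical_set_scope.
Variables (R : realType) (n : nat).

Definition nrm (x : 'cV[R]_n.+1) : R := (x^T *m x) 0 0.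

Lemma nrmE x : nrm x = \sum_k x k 0 ^+ 2.
Proof. by rewrite /nrm mxE; apply: eq_bigr => k _; rewrite mxE expr2. Qed.

Lemma nrm_ge0 x : 0 <= nrm x.
Proof. by rewrite nrmE; apply: sumr_ge0 => k _; exact: sqr_ge0. Qed.

Lemma nrm_gt0 x : x != 0 -> 0 < nrm x.
Proof.
move=> xn0; rewrite lt_def nrm_ge0 andbT; apply: contra xn0.
rewrite nrmE psumr_eq0 => [/allP h|k _]; last exact: sqr_ge0.
apply/eqP/matrixP => i j; rewrite (ord1 j) mxE.
by have /(_ (mem_index_enum i)) := h i; rewrite sqrf_eq0 => /eqP.
Qed.

Lemma bil1 x : bil 1%:M x x = nrm x.
Proof. by rewrite /bil mulmx1. Qed.

Lemma rayleigh (M : 'M[R]_n.+1) : symmx M ->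
  exists lam, eigenvalue M lam /\ forall x, bil M x x <= lam * nrm x.
Proof.
move=> sM.
pose g (r : 'rV[R]_n.+1) := \sum_k r 0 k * r 0 k.
pose f (r : 'rV[R]_n.+1) := \sum_i \sum_k r 0 i * M i k * r 0 k.
pose S := [set r | g r = 1].
have gc : continuous g.
  apply: cont_sum => k; apply: cont_mul; exact: cont_coord.
have fc : continuous f.
  apply: cont_sum => i; apply: cont_sum => k; apply: cont_mul; last exact: cont_coord.
  apply: cont_mul; [exact: cont_coord | exact: cst_continuous].
have gE r : g r = nrm r^T.
  by rewrite nrmE; apply: eq_bigr => k _; rewrite !mxE expr2.
have fE r : f r = bil M r^T r^T.
  rewrite /bil trmxK [RHS]mxE /f exchange_big /=; apply: eq_bigr => k _.
  rewrite [(r *m M) 0 k]mxE big_distrl /=.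
  by apply: eq_bigr => i _; rewrite !mxE.
have S0 : S !=set0.
  exists (delta_mx 0 0); rewrite /S /= /g (bigD1 0) //= !mxE /= mulr1.
  by rewrite big1 ?addr0 // => k k0; rewrite !mxE (negbTE k0) andbF mul0r.
have Sb : bounded_set S.
    have BE := @bounded_entries R n.+1 S 1; apply: BE => r Sr j.
    have : r 0 j * r 0 j <= 1.
      rewrite -Sr /g (bigD1 j) //= lerDl; apply: sumr_ge0 => k _.
      by rewrite -expr2 sqr_ge0.
    move=> h; rewrite ler_norml; apply/andP; split; nra.
have Scl : closed S.
  rewrite (_ : S = g @^-1` [set x | x = 1]) //; apply: preimage_closed; last exact: closed_eq.
  by move=> r _; exact: gc.
have Sc : compact S by exact: bounded_closed_compact Sb Scl.
have [c Sc' cmax] := compact_EVT_max S0 Sc (continuous_subspaceT fc).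
have gc1 : g c = 1 by move: Sc'; rewrite inE.
set lam := f c.
have key x : bil M x x <= lam * nrm x.
  have [->|xn0] := eqVneq x 0.
    by rewrite /bil /nrm trmx0 !mul0mx !mxE mulr0.
  have np := nrm_gt0 xn0.
  set s := Num.sqrt (nrm x).
  have sp : 0 < s by rewrite sqrtr_gt0.
  have s2 : s ^+ 2 = nrm x by rewrite sqr_sqrtr // ltW.
  pose r := s^-1 *: x^T.
  have Sr : r \in S.
    rewrite inE /S /= gE /r linearZ /= trmxK -bil1 bilZl bilZr bil1 -s2.
    by field; exact: lt0r_neq0.
  have := cmax r Sr; rewrite /lam !fE /r linearZ /= !trmxK bilZl bilZr.
  rewrite -s2 => h.
  have sn0 : s != 0 by exact: lt0r_neq0.
  have s2p : 0 < s ^+ 2 by rewrite exprn_gt0.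
  move: h; rewrite -(ler_pM2r s2p).
  have -> : (s^-1 * (s^-1 * bil M x x)) * s ^+ 2 = bil M x x by field.
  by [].
exists lam; split => //.
pose N := lam%:M - M.
pose v := c^T.
have sN : symmx N by rewrite /symmx /N linearB /= tr_scalar_mx sM.
have bN x : bil N x x = lam * nrm x - bil M x x.
  by rewrite /N bilDM bilNM -scalemx1 bilZM bil1.
have pN : psd N.
  by split => // x; change (0 <= bil N x x); rewrite bN subr_ge0 key.
have Nv0 : bil N v v = 0.
  by rewrite bN /v -fE -gE gc1 mulr1 subrr.
have Nv h : bil N h v = 0.
  apply/eqP; apply/negPn/negP => an0.
  set a := bil N h v in an0; set q := bil N h h.
  have q0 : 0 <= q by exact: psd_bil.
  pose t := - a / (q + 1).
  have := psd_bil (v + t *: h) pN.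
  rewrite !bilDl !bilDr !bilZl !bilZr Nv0 (bilC v h sN) -/a -/q.
  have q1 : q + 1 != 0 by apply: lt0r_neq0; lra.
  have -> : 0 + t * a + (t * a + t * (t * q)) = - a ^+ 2 * (q + 2) / (q + 1) ^+ 2.
    by rewrite /t; field.
  move=> hh.
  have a2 : 0 < a ^+ 2 by rewrite lt_def sqrf_eq0 an0 sqr_ge0.
  have hp : 0 < a ^+ 2 * (q + 2) / (q + 1) ^+ 2.
    apply: divr_gt0; last by rewrite exprn_gt0 //; lra.
    by apply: mulr_gt0 => //; lra.
  rewrite !mulNr oppr_ge0 in hh; lra.
have Nv' : N *m v = 0.
  by apply/matrixP => i j; rewrite (ord1 j) -bil_evl Nv mxE.
have Mv : M *m v = lam *: v.
  by move: Nv'; rewrite /N mulmxBl mul_scalar_mx => /eqP; rewrite subr_eq0 => /eqP.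
apply/eigenvalueP; exists c.
  have -> : c *m M = (M *m v)^T by rewrite trmx_mul /v trmxK sM.
  by rewrite Mv linearZ /= /v trmxK.
apply/eqP => c0.
move: gc1; rewrite c0 /g big1 => [/eqP|k _]; last by rewrite mxE mul0r.
by rewrite eq_sym oner_eq0.
Qed.


Lemma eig_bil (M : 'M[R]_n.+1) a u : u *m M = a *: u -> bil M u^T u^T = a * nrm u^T.
Proof. by move=> h; rewrite /bil /nrm trmxK h -scalemxAl [LHS]mxE. Qed.

Lemma eig_le (M : 'M[R]_n.+1) lam a :
  (forall x, bil M x x <= lam * nrm x) -> eigenvalue M a -> a <= lam.
Proof.
move=> h /eigenvalueP [u uM un0].
have := h u^T; rewrite (eig_bil uM) ler_pM2r //.
by apply: nrm_gt0; rewrite trmx_eq0.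
Qed.

Lemma lmax_spec (M : 'M[R]_n.+1) : symmx M ->
  eigenvalue M (lambda_max M) /\ forall x, bil M x x <= lambda_max M * nrm x.
Proof.
move=> sM; have [lam [el hl]] := rayleigh sM.
suff -> : lambda_max M = lam by [].
apply/eqP; rewrite eq_le; apply/andP; split.
  apply: ge_sup; first by exists lam.
  by move=> a ea; exact: eig_le hl ea.
apply: ub_le_sup => //; exists lam => a ea; exact: eig_le hl ea.
Qed.

Lemma symN (X : 'M[R]_n.+1) : symmx X -> symmx (- X).
Proof. by move=> sX; rewrite /symmx linearN /= sX. Qed.

Lemma pen_psd (X : 'M[R]_n.+1) : symmx X ->
  psd (X + Num.max (lambda_max (- X)) 0 *: 1%:M).
Proof.
move=> sX; have [_ h] := lmax_spec (symN sX).
split.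
  by rewrite /symmx linearD /= linearZ /= trmx1 sX.
move=> x; change (0 <= bil (X + Num.max (lambda_max (- X)) 0 *: 1%:M) x x).
rewrite bilDM bilZM bil1.
have := h x; rewrite bilNM => hx.
have n0 := nrm_ge0 x.
have : lambda_max (- X) * nrm x <= Num.max (lambda_max (- X)) 0 * nrm x.
  by rewrite ler_wpM2r // le_max lexx.
lra.
Qed.

Lemma psd_lmax (X : 'M[R]_n.+1) : psd X -> lambda_max (- X) <= 0.
Proof.
move=> pX; have [sX _] := pX; have [e _] := lmax_spec (symN sX).
move/eigenvalueP: e => [u uM un0].
have := eig_bil uM; rewrite bilNM => h.
have hp := psd_bil u^T pX.
have np : 0 < nrm u^T by apply: nrm_gt0; rewrite trmx_eq0.
by rewrite -(ler_pM2r np) mul0r -h oppr_le0.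
Qed.

Lemma lmax_psd (X : 'M[R]_n.+1) : symmx X -> lambda_max (- X) <= 0 -> psd X.
Proof.
move=> sX hl; have [_ h] := lmax_spec (symN sX).
split => // x; change (0 <= bil X x x).
have := h x; rewrite bilNM => hx.
have := nrm_ge0 x => n0.
have : lambda_max (- X) * nrm x <= 0 by rewrite mulr_le0_ge0.
lra.
Qed.

Lemma pd_mu (P : 'M[R]_n.+1) : pd P -> exists2 mu, 0 < mu & psd (P - mu *: 1%:M).
Proof.
move=> [sP hP]; have [e h] := lmax_spec (symN sP).
move/eigenvalueP: e => [u uM un0].
have un0' : u^T != 0 by rewrite trmx_eq0.
have hp := hP u^T un0'.
have := eig_bil uM; rewrite bilNM => he.
have np := nrm_gt0 un0'.
have hp' : 0 < bil P u^T u^T by [].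
exists (- lambda_max (- P)).
  rewrite oppr_gt0 -(ltr_pM2r np) mul0r -he; lra.
split.
  by rewrite /symmx linearB /= linearZ /= trmx1 sP.
move=> x; change (0 <= bil (P - - lambda_max (- P) *: 1%:M) x x).
rewrite bilDM bilNM bilZM bil1.
have := h x; rewrite bilNM; lra.
Qed.

End Ray.

Section PsdMisc.
Local Open Scope classical_set_scope.
Variables (R : realType) (n : nat).
Implicit Types (P Q X : 'M[R]_n).

Lemma psd0 : psd (0 : 'M[R]_n).
Proof. by split; [rewrite /symmx trmx0 | move=> x; rewrite !mulmx0 mul0mx mxE]. Qed.

Lemma psdD P Q : psd P -> psd Q -> psd (P + Q).
Proof.
move=> pP pQ; have [sP _] := pP; have [sQ _] := pQ.
split; first by rewrite /symmx linearD /= sP sQ.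
move=> x; change (0 <= bil (P + Q) x x); rewrite bilDM.
by apply: addr_ge0; exact: psd_bil.
Qed.

Lemma psdZ a P : 0 <= a -> psd P -> psd (a *: P).
Proof.
move=> a0 pP; have [sP _] := pP.
split; first by rewrite /symmx linearZ /= sP.
move=> x; change (0 <= bil (a *: P) x x); rewrite bilZM.
by apply: mulr_ge0 => //; exact: psd_bil.
Qed.

Lemma trinner_sumr I (r : seq I) (F : I -> 'M[R]_n) X :
  trinner (\sum_(i <- r) F i) X = \sum_(i <- r) trinner (F i) X.
Proof.
elim: r => [|i r IH]; first by rewrite !big_nil trinner0l.
by rewrite !big_cons trinnerDl IH.
Qed.

End PsdMisc.

Section Duality.
Local Open Scope classical_set_scope.
Variables (R : realType) (n m : nat).
Variables (C : 'M[R]_n.+1) (A : 'I_m -> 'M[R]_n.+1) (b : 'I_m -> R).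
Hypothesis sC : symmx C.
Hypothesis sA : forall i, symmx (A i).

Lemma trinner_adj y X : trinner (opAadj A y) X = \sum_i y i * trinner (A i) X.
Proof. by rewrite /opAadj trinner_sumr; apply: eq_bigr => i _; rewrite trinnerZl. Qed.

Lemma obj_split X y Z : opA A X = b -> Z + opAadj A y = C ->
  trinner C X = trinner Z X + dual_obj b y.
Proof.
move=> hX hZ; rewrite -hZ trinnerDl trinner_adj /dual_obj; congr (_ + _).
apply: eq_bigr => i _; rewrite mulrC; congr (_ * _).
by rewrite -hX.
Qed.

Lemma weak_dual X y Z : primal_feasible A b X -> dual_feasible C A y Z ->
  dual_obj b y <= trinner C X.
Proof.
move=> [_ [hX pX]] [_ [hZ pZ]].
rewrite (obj_split hX hZ) lerDr; exact: trinner_psd.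
Qed.

Lemma pen_ge X y Z rho : symmx X -> opA A X = b -> dual_feasible C A y Z ->
  dual_obj b y + (rho - \tr Z) * Num.max (lambda_max (- X)) 0 <=
  penalized_obj C rho X.
Proof.
move=> sX hX [_ [hZ pZ]]; rewrite /penalized_obj (obj_split hX hZ).
set l := Num.max (lambda_max (- X)) 0.
have := trinner_psd pZ (pen_psd sX).
rewrite trinnerDr trinnerZr trinner1r -/l => h.
lra.
Qed.

Lemma tr_bound X0 mu y Z : opA A X0 = b -> psd (X0 - mu *: 1%:M) ->
  dual_feasible C A y Z -> mu * \tr Z <= trinner C X0 - dual_obj b y.
Proof.
move=> hX0 pX0 [_ [hZ pZ]]; rewrite (obj_split hX0 hZ).
have := trinner_psd pZ pX0.
rewrite trinnerDr trinnerNr trinnerZr trinner1r; lra.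
Qed.

End Duality.

Section Helpers.
Local Open Scope classical_set_scope.
Variable R : realType.

Lemma le_sum1 (I : finType) (F : I -> R) i :
  (forall j, 0 <= F j) -> F i <= \sum_j F j.
Proof. by move=> h; rewrite (bigD1 i) //= lerDl sumr_ge0. Qed.

Lemma le_sum2 (I J : finType) (F : I -> J -> R) i j :
  (forall i j, 0 <= F i j) -> F i j <= \sum_i \sum_j F i j.
Proof.
move=> h; apply: (le_trans (@le_sum1 _ (F i) j (h i))).
apply: (@le_sum1 _ (fun i => \sum_j F i j)) => k; exact: sumr_ge0.
Qed.

Lemma cont_affine m (c : R) (d : 'I_m -> R) :
  continuous (fun v : 'rV[R]_m => c - \sum_i v 0 i * d i).
Proof.
move=> v; apply: continuousB; first exact: cst_continuous.
apply: (@cont_sum R _ _ _ (fun i (w : 'rV[R]_m) => w 0 i * d i)) => i.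
by apply: cont_mul; [exact: cont_coord | exact: cst_continuous].
Qed.

End Helpers.

Section Attain.
Local Open Scope classical_set_scope.
Variables (R : realType) (n m : nat).
Variables (C : 'M[R]_n.+1) (A : 'I_m -> 'M[R]_n.+1) (b : 'I_m -> R).
Hypothesis sC : symmx C.
Hypothesis sA : forall i, symmx (A i).
Hypothesis lin : lin_indep A.
Variables (X0 : 'M[R]_n.+1) (mu0 : R).
Hypothesis hX0 : opA A X0 = b.
Hypothesis pX0 : psd (X0 - mu0 *: 1%:M).
Hypothesis mu0p : 0 < mu0.
Variables (y0 : 'I_m -> R) (Z0 : 'M[R]_n.+1).
Hypothesis d0 : dual_feasible C A y0 Z0.

Definition yv (v : 'rV[R]_m) : 'I_m -> R := fun i => v 0 i.

Lemma sym_adj y : symmx (opAadj A y).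
Proof.
rewrite /symmx /opAadj linear_sum /=; apply: eq_bigr => i _.
by rewrite linearZ /= sA.
Qed.

Lemma symZ y : symmx (C - opAadj A y).
Proof. by rewrite /symmx linearB /= sC sym_adj. Qed.

Lemma dfeas y : psd (C - opAadj A y) -> dual_feasible C A y (C - opAadj A y).
Proof. by move=> h; split; [exact: symZ | split; [rewrite subrK | exact: h]]. Qed.

Lemma dfeasE y Z : dual_feasible C A y Z -> Z = C - opAadj A y.
Proof. by move=> [_ [h _]]; rewrite -h addrK. Qed.

Definition t0 := dual_obj b y0.
Definition K1 := (trinner C X0 - t0) / mu0.

Lemma trZ_le y Z : dual_feasible C A y Z -> t0 <= dual_obj b y -> \tr Z <= K1.
Proof.
move=> df ht; have := tr_bound hX0 pX0 df.
rewrite /K1 ler_pdivlMr // => h; rewrite mulrC; lra.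
Qed.

Definition Amat : 'M[R]_(m, n.+1 * n.+1) := \matrix_(i, k) mxvec (A i) 0 k.

Lemma Amat_mul v : v *m Amat = mxvec (opAadj A (yv v)).
Proof.
apply/rowP => k; rewrite !mxE /opAadj linear_sum summxE /=.
by apply: eq_bigr => i _; rewrite linearZ !mxE.
Qed.

Lemma Amat_free : row_free Amat.
Proof.
apply: inj_row_free => v; rewrite Amat_mul => h.
apply/rowP => i; rewrite mxE; apply: lin.
by rewrite -[opAadj A (yv v)]mxvecK h linear0.
Qed.

Definition Dset := [set v : 'rV[R]_m |
  psd (C - opAadj A (yv v)) /\ t0 <= dual_obj b (yv v)].

Lemma bil_CZ y x : bil (C - opAadj A y) x x = bil C x x - \sum_i y i * bil (A i) x x.
Proof.
rewrite bilDM bilNM /opAadj bil_sumM; congr (_ - _).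
by apply: eq_bigr => i _; rewrite bilZM.
Qed.

Lemma Dset_closed : closed Dset.
Proof.
have -> : Dset = (\bigcap_(x in setT)
     [set v : 'rV[R]_m | 0 <= bil (C - opAadj A (yv v)) x x]) `&`
     [set v | t0 <= dual_obj b (yv v)].
  apply/seteqP; split => v /=.
    by move=> [[_ h] ht]; split => // x _; exact: h x.
  by move=> [h ht]; split => //; split; [exact: symZ | move=> x; exact: h x I].
apply: closedI.
  apply: closed_bigI => x _.
  rewrite (_ : [set v | _] = (fun v : 'rV[R]_m => bil C x x - \sum_i v 0 i * bil (A i) x x)
              @^-1` [set r | 0 <= r]); last first.
    by apply/seteqP; split => v /=; rewrite bil_CZ.
  apply: preimage_closed; last exact: closed_ge.
  by move=> v _; exact: cont_affine.
rewrite (_ : [set v | _] = (fun v : 'rV[R]_m => 0 - \sum_i v 0 i * (- b i))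
            @^-1` [set r | t0 <= r]); last first.
  have e (v : 'rV[R]_m) : 0 - \sum_i v 0 i * (- b i) = dual_obj b (yv v).
    rewrite /dual_obj sub0r -sumrN; apply: eq_bigr => i _.
    by rewrite mulrN opprK mulrC.
  by apply/seteqP; split => v /=; rewrite e.
apply: preimage_closed; last exact: closed_ge.
by move=> v _; exact: cont_affine.
Qed.


Lemma Dset_bounded : bounded_set Dset.
Proof.
have [B AB] := row_freeP Amat_free.
pose Cs := \sum_i \sum_j `|C i j|.
pose K2 := Cs + K1.
pose Bs := \sum_k \sum_i `|B k i|.
apply: (@bounded_entries R m Dset (K2 * Bs)) => v [pZ ht] i.
have df := dfeas pZ.
have trle := trZ_le df ht.
set Z := C - opAadj A (yv v) in pZ df trle.
have wE : v *m Amat = mxvec (C - Z) by rewrite Amat_mul /Z opprB addrC subrK.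
have wb k : `|mxvec (C - Z) 0 k| <= K2.
  case/mxvec_indexP: k => a c; rewrite mxvecE mxE.
  rewrite mxE; apply: le_trans (ler_normD _ _) _; rewrite normrN /K2; apply: lerD.
    rewrite /Cs; exact: (@le_sum2 _ _ _ (fun i j => `|C i j|)).
  exact: le_trans (psd_entry_le a c pZ) trle.
have K2p : 0 <= K2 by apply: le_trans (wb (mxvec_index 0 0)).
have -> : v = mxvec (C - Z) *m B by rewrite -wE -mulmxA AB mulmx1.
rewrite mxE; apply: le_trans (ler_norm_sum _ _ _) _.
apply: le_trans (_ : \sum_k K2 * `|B k i| <= _).
  apply: ler_sum => k _; rewrite normrM; apply: ler_wpM2r => //.
rewrite -mulr_sumr; apply: ler_wpM2l => //.
rewrite /Bs; apply: ler_sum => k _; exact: (@le_sum1 _ _ (fun i => `|B k i|)).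
Qed.

Lemma Dset_nonempty : Dset !=set0.
Proof.
exists (\row_i y0 i).
rewrite /Dset /=; have -> : yv (\row_i y0 i) = y0 by apply: funext => i; rewrite /yv mxE.
by rewrite -(dfeasE d0); split => //; case: d0 => _ [].
Qed.

Lemma dual_attain : exists ys, dual_optimal C A b ys (C - opAadj A ys).
Proof.
have cobj : continuous (fun v : 'rV[R]_m => dual_obj b (yv v)).
  have e (v : 'rV[R]_m) : dual_obj b (yv v) = 0 - \sum_i v 0 i * (- b i).
    rewrite /dual_obj sub0r -sumrN; apply: eq_bigr => i _.
    by rewrite mulrN opprK mulrC.
  rewrite (_ : (fun v => _) = (fun v : 'rV[R]_m => 0 - \sum_i v 0 i * (- b i))).
    exact: cont_affine.
  by apply: funext => v; rewrite e.
have Dc : compact Dset by exact: bounded_closed_compact Dset_bounded Dset_closed.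
have [c Dc' cmax] := compact_EVT_max Dset_nonempty Dc (continuous_subspaceT cobj).
move: Dc'; rewrite inE => -[pc hc].
exists (yv c); split; first exact: dfeas.
move=> y' Z' df'.
have [ge|lt] := leP t0 (dual_obj b y').
  have hy : yv (\row_i y' i) = y' by apply: funext => i; rewrite /yv mxE.
  have := cmax (\row_i y' i); rewrite hy; apply; rewrite inE /Dset /= hy; split => //.
  by rewrite -(dfeasE df'); case: df' => _ [].
exact: le_trans (ltW lt) hc.
Qed.

End Attain.

Section Gap.
Local Open Scope classical_set_scope.
Variables (R : realType) (n m : nat).

Lemma lin_vec_cont (F : 'M[R]_n.+1 -> R) :
  (forall a X Y, F (a *: X + Y) = a * F X + F Y) ->
  continuous (fun v : 'rV[R]_(n.+1 * n.+1) => F (vec_mx v)).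
Proof. by move=> hF; apply: lin_cont => a u w; rewrite linearP /= hF. Qed.

Lemma sum_quad (I : finType) (r a : I -> R) (tau : R) :
  \sum_i (r i + tau * a i) * (r i + tau * a i) =
  \sum_i r i * r i + 2 * tau * \sum_i r i * a i + tau ^+ 2 * \sum_i a i * a i.
Proof.
rewrite !mulr_sumr -!big_split /=; apply: eq_bigr => i _; ring.
Qed.

Lemma quad_ge0 (g h : R) : 0 <= h ->
  (forall tau, 0 < tau -> tau <= 1 -> 0 <= 2 * tau * g + tau ^+ 2 * h) -> 0 <= g.
Proof.
move=> h0 H; rewrite leNgt; apply/negP => g0.
set s := h - g.
have sp : 0 < s by rewrite /s; lra.
set tau := - g / s.
have taup : 0 < tau by rewrite /tau divr_gt0 //; lra.
have tau1 : tau <= 1 by rewrite /tau ler_pdivrMr // mul1r /s; lra.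
have th : tau * h <= - g.
  rewrite /tau mulrAC ler_pdivrMr // /s; nra.
have := H tau taup tau1.
have -> : 2 * tau * g + tau ^+ 2 * h = tau * (2 * g + tau * h) by ring.
rewrite pmulr_rge0 //; lra.
Qed.

Variables (C : 'M[R]_n.+1) (A : 'I_m -> 'M[R]_n.+1) (b : 'I_m -> R).
Hypothesis sC : symmx C.
Hypothesis sA : forall i, symmx (A i).
Variables (y1 : 'I_m -> R) (Z1 : 'M[R]_n.+1) (mu1 : R).
Hypothesis d1 : dual_feasible C A y1 Z1.
Hypothesis pZ1 : psd (Z1 - mu1 *: 1%:M).
Hypothesis mu1p : 0 < mu1.
Variable X0 : 'M[R]_n.+1.
Hypothesis f0 : primal_feasible A b X0.
Variable t : R.
Hypothesis ht : forall X, primal_feasible A b X -> t < trinner C X.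

Definition res (X : 'M[R]_n.+1) i := trinner (A i) X - b i.
Definition rc (X : 'M[R]_n.+1) := trinner C X - t.
Definition phi X := \sum_i res X i * res X i + rc X * rc X.

Definition Om := [set v : 'rV[R]_(n.+1 * n.+1) |
  psd (vec_mx v) /\ phi (vec_mx v) <= phi 0].

Lemma phi_cont : continuous (fun v : 'rV[R]_(n.+1 * n.+1) => phi (vec_mx v)).
Proof.
have ct (M : 'M[R]_n.+1) (c : R) :
    continuous (fun v : 'rV[R]_(n.+1 * n.+1) => trinner M (vec_mx v) - c).
  move=> v; apply: (@continuousB _ _ _ (fun w : 'rV[R]_(n.+1 * n.+1) => trinner M (vec_mx w)) (fun _ => c)); last exact: cst_continuous.
  by apply: (lin_vec_cont (F := trinner M)) => a X Y; rewrite trinnerDr trinnerZr.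
move=> v; rewrite /phi.
apply: (@continuousD _ _ _ (fun w : 'rV[R]_(n.+1 * n.+1) => \sum_i res (vec_mx w) i * res (vec_mx w) i)
   (fun w => rc (vec_mx w) * rc (vec_mx w))).
  apply: (@cont_sum R _ _ _ (fun i w => res (vec_mx w) i * res (vec_mx w) i)) => i.
  by apply: cont_mul; exact: (ct (A i) (b i)).
by apply: cont_mul; exact: (ct C t).
Qed.

Lemma Om_closed : closed Om.
Proof.
have -> : Om = (\bigcap_(ij in setT)
     [set v : 'rV[R]_(n.+1 * n.+1) | vec_mx v ij.1 ij.2 - vec_mx v ij.2 ij.1 = 0]) `&`
    ((\bigcap_(x in setT) [set v | 0 <= bil (vec_mx v) x x]) `&`
     [set v | phi (vec_mx v) <= phi 0]).
  apply/seteqP; split => v /=.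
    move=> [[sv pv] hv]; split.
      move=> [i j] _ /=; apply/eqP; rewrite subr_eq0; apply/eqP.
      by rewrite -{1}sv mxE.
    by split => // x _; exact: pv.
  move=> [hs [hp hv]]; split => //; split; last by move=> x; exact: hp x I.
  apply/matrixP => i j; rewrite mxE; apply/eqP; rewrite -subr_eq0; apply/eqP.
  exact: (hs (j, i) I).
apply: closedI.
  apply: closed_bigI => -[i j] _.
  apply: (@closed_preim_eq R _ (fun v : 'rV[R]_(n.+1 * n.+1) =>
      (fun X : 'M[R]_n.+1 => X i j - X j i) (vec_mx v))).
  by apply: (lin_vec_cont (F := fun X : 'M[R]_n.+1 => X i j - X j i)) => a X Y; rewrite !mxE; ring.
apply: closedI.
  apply: closed_bigI => x _.
  apply: (@closed_preim_ge R _ (fun v : 'rV[R]_(n.+1 * n.+1) =>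
      (fun X : 'M[R]_n.+1 => bil X x x) (vec_mx v))).
  by apply: (lin_vec_cont (F := fun X : 'M[R]_n.+1 => bil X x x)) => a X Y; rewrite bilDM bilZM.
apply: (@closed_preim_le R _ (fun v : 'rV[R]_(n.+1 * n.+1) => phi (vec_mx v))).
exact: phi_cont.
Qed.


Lemma res_le X i : res X i * res X i <= phi X.
Proof.
rewrite /phi; apply: le_trans (_ : \sum_i res X i * res X i <= _); last first.
  by rewrite lerDl -expr2 sqr_ge0.
by apply: (@le_sum1 _ _ (fun i => res X i * res X i)) => j; rewrite -expr2 sqr_ge0.
Qed.

Lemma rc_le X : rc X * rc X <= phi X.
Proof.
by rewrite /phi lerDr; apply: sumr_ge0 => i _; rewrite -expr2 sqr_ge0.
Qed.

Lemma abs_le (u p : R) : u * u <= p -> `|u| <= 1 + p.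
Proof. move=> h; rewrite ler_norml; apply/andP; split; nra. Qed.

Lemma trC_split X : trinner C X = trinner Z1 X + \sum_i y1 i * trinner (A i) X.
Proof. by case: d1 => _ [<- _]; rewrite trinnerDl trinner_adj. Qed.

Lemma Om_bounded : bounded_set Om.
Proof.
pose p0 := phi 0.
pose K3 := `|t| + (1 + p0) + \sum_i `|y1 i| * (`|b i| + (1 + p0)).
apply: (@bounded_entries R _ Om (K3 / mu1)) => v [pX hX] k.
set X := vec_mx v in pX hX.
have hr i : `|res X i| <= 1 + p0 by apply: abs_le; exact: le_trans (res_le X i) hX.
have hc : `|rc X| <= 1 + p0 by apply: abs_le; exact: le_trans (rc_le X) hX.
have h1 : mu1 * \tr X <= trinner Z1 X.
  have := trinner_psd pZ1 pX.
  rewrite trinnerDl trinnerNl trinnerZl trinner1l; lra.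
have h2 : trinner Z1 X = (t + rc X) - \sum_i y1 i * (b i + res X i).
  have e1 : t + rc X = trinner C X by rewrite /rc; ring.
  have e2 : \sum_i y1 i * (b i + res X i) = \sum_i y1 i * trinner (A i) X.
    by apply: eq_bigr => i _; rewrite /res; ring.
  rewrite e1 e2 trC_split; ring.
have h3 : - \sum_i y1 i * (b i + res X i) <= \sum_i `|y1 i| * (`|b i| + (1 + p0)).
  rewrite -sumrN; apply: ler_sum => i _.
  apply: le_trans (ler_norm _) _; rewrite normrN normrM.
  apply: ler_wpM2l => //; apply: le_trans (ler_normD _ _) _; exact: lerD.
have h4 : t + rc X <= `|t| + (1 + p0).
  apply: lerD; [exact: ler_norm | exact: le_trans (ler_norm _) hc].
have trX : \tr X <= K3 / mu1.
  rewrite ler_pdivlMr // mulrC; apply: le_trans h1 _; rewrite h2 /K3; lra.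
rewrite -[v]vec_mxK; case/mxvec_indexP: k => i j; rewrite mxvecE -/X.
exact: le_trans (psd_entry_le i j pX) trX.
Qed.


Lemma phi_ge0 X : 0 <= phi X.
Proof.
rewrite /phi; apply: addr_ge0; last by rewrite -expr2 sqr_ge0.
by apply: sumr_ge0 => i _; rewrite -expr2 sqr_ge0.
Qed.

Lemma gap : exists y Z, dual_feasible C A y Z /\ t < dual_obj b y.
Proof.
have Om0 : Om !=set0.
  by exists 0; rewrite /Om /= linear0; split; [exact: psd0 | exact: lexx].
have Omc : compact Om by exact: bounded_closed_compact Om_bounded Om_closed.
have [c Oc cmin] := compact_EVT_min Om0 Omc (continuous_subspaceT phi_cont).
have Oc' := Oc; move: Oc'; rewrite inE => -[pXs hXs].
set Xs := vec_mx c in pXs hXs.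
have minX X : psd X -> phi Xs <= phi X.
  move=> pX; have [le|lt] := leP (phi X) (phi 0).
    have := cmin (mxvec X); rewrite mxvecK; apply.
    by rewrite inE /Om /= mxvecK.
  exact: le_trans hXs (ltW lt).
set r := res Xs; set r0 := rc Xs.
pose W := opAadj A r + r0 *: C.
have gW X : trinner W X = \sum_i r i * trinner (A i) X + r0 * trinner C X.
  by rewrite /W trinnerDl trinner_adj trinnerZl.
have resD X tau i : res (Xs + tau *: X) i = r i + tau * trinner (A i) X.
  by rewrite /r /res trinnerDr trinnerZr; ring.
have rcD X tau : rc (Xs + tau *: X) = r0 + tau * trinner C X.
  by rewrite /r0 /rc trinnerDr trinnerZr; ring.
have phiD X tau : phi (Xs + tau *: X) = phi Xs + 2 * tau * trinner W X +
    tau ^+ 2 * (\sum_i trinner (A i) X * trinner (A i) X + trinner C X * trinner C X).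
  rewrite /phi; under eq_bigr do rewrite resD.
  rewrite rcD sum_quad gW -/r -/r0; ring.
have gnn X : psd X -> 0 <= trinner W (X - Xs).
  move=> pX; set D := X - Xs.
  apply: (@quad_ge0 _ (\sum_i trinner (A i) D * trinner (A i) D + trinner C D * trinner C D)).
    apply: addr_ge0; last by rewrite -expr2 sqr_ge0.
    by apply: sumr_ge0 => i _; rewrite -expr2 sqr_ge0.
  move=> tau t0 t1.
  have pc : psd (Xs + tau *: D).
    have -> : Xs + tau *: D = (1 - tau) *: Xs + tau *: X.
      by rewrite /D scalerBr scalerBl scale1r addrA addrAC.
    by apply: psdD; apply: psdZ => //; lra.
  have := minX _ pc; rewrite phiD -/D; lra.
have g0 : trinner W Xs = 0.
  have h1 := gnn 0 (@psd0 R n.+1).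
  have h2 := gnn (2 *: Xs) (psdZ (ler0n _ 2) pXs).
  rewrite sub0r trinnerNr in h1.
  have e : 2 *: Xs - Xs = Xs by rewrite scaler_nat mulr2n addrK.
  rewrite e in h2; lra.
have gX X : psd X -> 0 <= trinner W X.
  by move=> pX; have := gnn X pX; rewrite trinnerDr trinnerNr g0 subr0.
have pW : psd W.
  split.
    by rewrite /symmx /W linearD /= linearZ /= sC (sym_adj sA r).
  move=> x; change (0 <= bil W x x); rewrite -trinner_outer; exact: gX (psd_outer x).
have key : \sum_i r i * b i + r0 * t = - phi Xs.
  have eb : \sum_i r i * b i = \sum_i r i * trinner (A i) Xs - \sum_i r i * r i.
    by rewrite -sumrB; apply: eq_bigr => i _; rewrite /r /res; ring.
  have et : t = trinner C Xs - r0 by rewrite /r0 /rc; ring.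
  move: g0; rewrite gW => g0.
  rewrite eb et /phi -/r -/r0 mulrBr; lra.
have phip : 0 < phi Xs.
  rewrite lt_def phi_ge0 andbT; apply/eqP => p0.
  have hr0 : r0 = 0.
    by apply/eqP; rewrite -sqrf_eq0 eq_le sqr_ge0 andbT expr2 -p0 rc_le.
  have hr i : r i = 0.
    by apply/eqP; rewrite -sqrf_eq0 eq_le sqr_ge0 andbT expr2 -p0 res_le.
  have fX : primal_feasible A b Xs.
    split; first by case: pXs.
    split => //; apply: funext => i; have := hr i; rewrite /r /res => /eqP.
    by rewrite subr_eq0 => /eqP.
  have := ht fX; have : trinner C Xs = t.
    by have := hr0; rewrite /r0 /rc => /eqP; rewrite subr_eq0 => /eqP.
  move=> ->; rewrite ltxx.
  by [].
have [_ [hX0 pX0]] := f0.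
have tX0 := ht f0.
have wX0 := gX X0 pX0.
rewrite gW in wX0.
have eX0 : \sum_i r i * trinner (A i) X0 = \sum_i r i * b i.
  by apply: eq_bigr => i _; rewrite -hX0.
rewrite eX0 in wX0.
have [r0p | r0n] := ltP 0 r0; last by exfalso; nra.
pose y := fun i => - (r i / r0).
have r0n0 : r0 != 0 by exact: lt0r_neq0.
have eZ : C - opAadj A y = r0^-1 *: W.
  rewrite /W /opAadj scalerDr scalerA mulVf // scale1r scaler_sumr -sumrN addrC.
  congr (_ + _); apply: eq_bigr => i _.
  by rewrite scalerA -scaleNr /y opprK mulrC.
exists y, (C - opAadj A y); split.
  by apply: dfeas => //; rewrite eZ; apply: psdZ => //; rewrite invr_ge0 ltW.
have ey : dual_obj b y * r0 = - \sum_i r i * b i.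
  rewrite /dual_obj mulr_suml -sumrN; apply: eq_bigr => i _.
  by rewrite /y; field.
rewrite -(ltr_pM2r r0p) ey; nra.
Qed.

End Gap.

Lemma pd_psd (R : realType) n (P : 'M[R]_n) : pd P -> psd P.
Proof.
move=> [sP hP]; split => // x.
have [->|xn0] := eqVneq x 0; last exact: ltW (hP x xn0).
by rewrite mulmx0 mxE.
Qed.

Unset Implicit Arguments. Set Strict Implicit.

Theorem proposition3p1 (R : realType) (n m : nat)
    (C : 'M[R]_n) (A : 'I_m -> 'M[R]_n) (b : 'I_m -> R) (rho : R) :
  symmx C -> (forall i, symmx (A i)) ->
  lin_indep A -> strictly_feasible C A b ->
  D_Zstar C A b < rho ->
  forall Xh : 'M[R]_n, symmx Xh ->
    (primal_optimal C A b Xh <-> penalized_optimal C A b rho Xh).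
Proof.
case: n C A => [|n] C A sC sA lin sf hrho Xh sXh.
  have all0 (X : 'M[R]_0) : X = 0 by exact: flatmx0.
  split.
    move=> [[_ [hXh _]] _]; split; first by [].
    by move=> X' _; rewrite (all0 X') (all0 Xh).
  move=> [[_ hXh] _]; split.
    split => //; split => //; split => // x.
    by rewrite (all0 Xh) mulmx0 mul0mx mxE.
  by move=> X' _; rewrite (all0 X') (all0 Xh).
have [[X0 [sX0 [hX0 pdX0]]] [y1 [Z1 [sZ1 [hZ1 pdZ1]]]]] := sf.
have [mu0 mu0p pX0] := pd_mu pdX0.
have [mu1 mu1p pZ1] := pd_mu pdZ1.
have f0 : primal_feasible A b X0 by split => //; split => //; exact: pd_psd.
have d1 : dual_feasible C A y1 Z1 by split => //; split => //; exact: pd_psd.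
have [ys [dfs dsopt]] := dual_attain sC sA lin hX0 pX0 mu0p d1.
set Zs := C - opAadj A ys in dfs dsopt.
have trs : \tr Zs < rho.
  apply: le_lt_trans hrho; rewrite /D_Zstar.
  apply: ub_le_sup; last by exists ys, Zs.
  exists (K1 C b X0 mu0 y1) => t [y [Z [[df dopt] ->]]].
  apply: (trZ_le hX0 pX0 mu0p df).
  exact: dopt d1.
have noGap v : (forall X, primal_feasible A b X -> v <= trinner C X) ->
    v <= dual_obj b ys.
  move=> hv; rewrite leNgt; apply/negP => lt.
  set t := (dual_obj b ys + v) / 2.
  have ht X : primal_feasible A b X -> t < trinner C X.
    by move=> fX; apply: lt_le_trans (hv X fX); rewrite /t; lra.
  have [y [Z [df ty]]] := gap sC sA d1 pZ1 mu1p f0 ht.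
  have := dsopt y Z df; rewrite /t in ty; lra.
have penE X : psd X -> penalized_obj C rho X = trinner C X.
  by move=> pX; rewrite /penalized_obj max_r ?psd_lmax // mulr0 addr0.
split.
  move=> [[_ [hXh pXh]] optXh]; split; first by [].
  move=> X' [sX' hX']; rewrite penE //.
  have := pen_ge rho sX' hX' dfs.
  have l0 : 0 <= Num.max (lambda_max (- X')) 0 by rewrite le_max lexx orbT.
  have := noGap _ optXh.
  move=> h1 h2; have : 0 <= (rho - \tr Zs) * Num.max (lambda_max (- X')) 0.
    by apply: mulr_ge0 => //; lra.
  lra.
move=> [[_ hXh] optP].
have h1 : penalized_obj C rho Xh <= dual_obj b ys.
  apply: noGap => X fX; have [_ [_ pX]] := fX.
  by rewrite -penE //; apply: optP; case: fX => sX [hX _].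
have h2 := pen_ge rho sXh hXh dfs.
set l := Num.max (lambda_max (- Xh)) 0 in h2.
have l0 : l <= 0.
  have : (rho - \tr Zs) * l <= 0 by lra.
  by rewrite pmulr_rle0 // subr_gt0.
have pXh : psd Xh.
  by apply: lmax_psd => //; apply: le_trans l0; rewrite le_max lexx.
split; first by split => //; split.
move=> X fX; have [_ [_ pX]] := fX.
rewrite -(penE Xh pXh) -(penE X pX); apply: optP; by case: fX => sX [hX _].
Qed.
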